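(* Let $S$ be a topological semigroup with an open right unit, and let $\chi(S)$ be its character. Then the topology of $S$ is generated by a family $\mathcal D$ of left-subinvariant $\overline{\mathsf{dist}}$-continuous quasi-pseudometrics with $|\mathcal D|\le\chi(S)$. If moreover $S$ is semiregular, the quasi-pseudometrics in $\mathcal D$ can additionally be chosen right-continuous.
   Context: A topological semigroup is a topological space with continuous associative multiplication; $e$ is an open right unit if $xe=x$ for all $x$ and $xV$ is a neighborhood of $x$ for every neighborhood $V$ of $e$ and every $x$. $\chi(S)$ is the least cardinal $\kappa$ such that every point has a neighborhood base of cardinality $\le\kappa$. Semiregular: every neighborhood $O_x$ of $x$ contains $\mathrm{int}\,\overline{U_x}$ for some neighborhood $U_x$ of $x$. A quasi-pseudometric is $d:S\times S\to[0,\infty)$ with $d(x,x)=0$ and the triangle inequality; left-subinvariant if $d(zx,zy)\le d(x,y)$ for all $x,y,z$; right-continuous if $y\mapsto d(x,y)$ is continuous for each $x$; $\overline{\mathsf{dist}}$-continuous if for every non-empty $A\subset S$ the function $x\mapsto\inf\{\varepsilon>0:x\in\overline{B_d(A,\varepsilon)}\}$ is continuous, where $B_d(A,\varepsilon)=\{y:\exists a\in A\ d(a,y)<\varepsilon\}$. A family $\mathcal D$ generates the topology if $\{B_d(x,\varepsilon):d\in\mathcal D,x\in S,\varepsilon>0\}$ is a subbase of it, where $B_d(x,\varepsilon)=\{y:d(x,y)<\varepsilon\}$. *)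

(* Defs.v *)
From HB Require Import structures.
From mathcomp Require Import all_boot all_order all_algebra.
From mathcomp Require Import all_classical all_reals all_analysis.
Set Implicit Arguments. Unset Strict Implicit. Unset Printing Implicit Defensive.
Import Order.TTheory GRing.Theory Num.Theory numFieldNormedType.Exports.
Local Open Scope classical_set_scope.
Local Open Scope ring_scope.

Section Defs.
Context {S : topologicalType}.

Definition topological_semigroup (mul : S -> S -> S) : Prop :=
  (forall x y z, mul x (mul y z) = mul (mul x y) z) /\
  continuous (fun p : S * S => mul p.1 p.2).

Definition open_right_unit (mul : S -> S -> S) (e : S) : Prop :=
  (forall x, mul x e = x) /\
  (forall (V : set S) (x : S), nbhs e V -> nbhs x (mul x @` V)).

Definition nbhs_base (x : S) (B : set (set S)) : Prop :=
  (forall U, B U -> nbhs x U) /\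
  (forall V, nbhs x V -> exists2 U, B U & U `<=` V).

(* "chi(S) <= |K|": every point has a neighborhood base of cardinality <= |K| *)
Definition character_le (K : Type) : Prop :=
  forall x : S, exists B : set (set S), nbhs_base x B /\ (B #<= [set: K])%card.

Definition semiregular : Prop :=
  forall (x : S) (O : set S), nbhs x O ->
    exists U : set S, nbhs x U /\ interior (closure U) `<=` O.

Variable R : realType.

Definition quasi_pseudometric (d : S -> S -> R) : Prop :=
  (forall x y, 0 <= d x y) /\ (forall x, d x x = 0) /\
  (forall x y z, d x z <= d x y + d y z).

Definition left_subinvariant (mul : S -> S -> S) (d : S -> S -> R) : Prop :=
  forall x y z, d (mul z x) (mul z y) <= d x y.

Definition right_continuous_qpm (d : S -> S -> R) : Prop :=
  forall x, continuous (fun y => d x y).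

Definition qball (d : S -> S -> R) (x : S) (eps : R) : set S :=
  [set y | d x y < eps].

Definition qball_set (d : S -> S -> R) (A : set S) (eps : R) : set S :=
  [set y | exists2 a, A a & d a y < eps].

Definition cl_dist (d : S -> S -> R) (A : set S) (x : S) : R :=
  inf [set eps : R | 0 < eps /\ closure (qball_set d A eps) x].

Definition cl_dist_continuous (d : S -> S -> R) : Prop :=
  forall A : set S, A !=set0 -> continuous (cl_dist d A).

(* {B_d(x,eps) : d in D, x in S, eps > 0} is a subbase of the topology of S:
   all these balls are open, and every open set is a union of finite
   intersections of them (the empty intersection being S). *)
Definition generates_topology (D : set (S -> S -> R)) : Prop :=
  (forall d x eps, D d -> 0 < eps -> open (qball d x eps)) /\
  (forall (U : set S) (x : S), open U -> U x ->
     exists s : seq ((S -> S -> R) * S * R),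
       (forall t, t \in s -> [/\ D t.1.1, 0 < t.2 & qball t.1.1 t.1.2 t.2 x]) /\
       (forall y, (forall t, t \in s -> qball t.1.1 t.1.2 t.2 y) -> U y)).

End Defs.

(* Main.v *)
Require Import Defs.
From HB Require Import structures.
From mathcomp Require Import all_boot all_order all_algebra.
From mathcomp Require Import all_classical all_reals all_analysis.
From mathcomp Require Import lra.
Import Order.TTheory GRing.Theory Num.Theory numFieldNormedType.Exports.
Local Open Scope classical_set_scope.
Local Open Scope ring_scope.
Set Implicit Arguments. Unset Strict Implicit.

Section Reach.
Variables (S : Type) (mul : S -> S -> S) (e : S).
Hypothesis massoc : forall x y z, mul x (mul y z) = mul (mul x y) z.
Hypothesis runit : forall x, mul x e = x.
Variable U : nat -> set S.

Fixpoint reach (x : S) (ns : seq nat) (y : S) : Prop :=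
  match ns with
  | [::] => y = x
  | n :: ns' => exists2 u, U n u & reach (mul x u) ns' y
  end.

Lemma reach_cat x a y b z : reach x a y -> reach y b z -> reach x (a ++ b) z.
Proof.
elim: a x => [|n a IH] x /=; first by move=> ->.
by case=> u Uu r1 r2; exists u => //; apply: IH r1 r2.
Qed.

Lemma reach_cat_inv x a b z : reach x (a ++ b) z -> exists2 y, reach x a y & reach y b z.
Proof.
elim: a x => [|n a IH] x /=; first by move=> r; exists x.
case=> u Uu /IH [y r1 r2]; exists y => //; by exists u.
Qed.

Lemma reach_left x ns y z : reach x ns y -> reach (mul z x) ns (mul z y).
Proof.
elim: ns x => [|n ns IH] x /=; first by move=> ->.
by case=> u Uu r; exists u => //; rewrite -massoc; apply: IH.
Qed.

Lemma reach_trans y ns w : reach y ns w ->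
  exists g, w = mul y g /\ forall y', reach y' ns (mul y' g).
Proof.
elim: ns y => [|n ns IH] y /=.
  by move=> ->; exists e; split => [|y']; rewrite runit.
case=> u Uu /IH [g [-> H]]; exists (mul u g); split; first by rewrite massoc.
by move=> y'; exists u => //; rewrite massoc; apply: H.
Qed.

End Reach.

Section Weights.
Variable R : realType.
Definition w (n : nat) : R := (2 ^+ n)^-1.
Definition wsum (ns : seq nat) : R := \sum_(n <- ns) w n.

Lemma w_gt0 n : 0 < w n.
Proof. by rewrite /w invr_gt0 exprn_gt0. Qed.

Lemma wS n : w n.+1 = w n / 2.
Proof. by rewrite /w exprSr invfM. Qed.

Lemma w_le n m : (n <= m)%N -> w m <= w n.
Proof.
move=> nm; rewrite /w lef_pV2 ?posrE ?exprn_gt0 //.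
by rewrite ler_eXn2l // ltr1n.
Qed.

Lemma w_lt n m : w n < w m -> (m < n)%N.
Proof. by rewrite ltnNge; apply: contraTN => /w_le; rewrite leNgt => ->. Qed.

Lemma w0 : w 0 = 1.
Proof. by rewrite /w expr0 invr1. Qed.

Lemma wsum_nil : wsum [::] = 0.
Proof. by rewrite /wsum big_nil. Qed.

Lemma wsum_cons n ns : wsum (n :: ns) = w n + wsum ns.
Proof. by rewrite /wsum big_cons. Qed.

Lemma wsum_cat a b : wsum (a ++ b) = wsum a + wsum b.
Proof. by rewrite /wsum big_cat. Qed.

Lemma wsum_ge0 ns : 0 <= wsum ns.
Proof. by rewrite /wsum; apply: sumr_ge0 => i _; apply/ltW/w_gt0. Qed.

Lemma w_small (d : R) : 0 < d -> exists m, w m < d.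
Proof.
move=> d0.
have [m Hm] : exists m : nat, d^-1 < m%:R.
  by exists (Num.Def.archi_bound d^-1); apply: archi_boundP; rewrite invr_ge0 ltW.
exists m; rewrite /w -(invrK d) ltf_pV2 ?posrE ?exprn_gt0 ?invr_gt0 //.
apply: (lt_le_trans Hm).
elim: m {Hm} => [|m IH]; first by rewrite exprn_ge0.
rewrite exprS -natr1 mulrDl mul1r.
have h1 : 1 <= (2:R) ^+ m by rewrite exprn_ege1 // ler1n.
by apply: lerD => //; rewrite ler_pMl ?ltr0n // ?exprn_gt0 // ler1n.
Qed.

Lemma wsplit ns (h : R) : ns != [::] -> 0 < h ->
  exists pre n suf, [/\ ns = pre ++ n :: suf, wsum pre < h &
     (suf = [::] \/ h <= wsum pre + w n)].
Proof.
elim: ns h => [|a rest IH] h // _ h0.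
have [ha|ha] := leP h (w a).
  by exists [::], a, rest; split => //; rewrite wsum_nil // ; right; rewrite add0r.
case: rest IH => [|b rest] IH.
  by exists [::], a, [::]; split => //; [rewrite wsum_nil | left].
have [|pre [n [suf [E1 E2 E3]]]] := IH (h - w a) isT; first by rewrite subr_gt0.
exists (a :: pre), n, suf; split; first by rewrite E1.
  by rewrite wsum_cons -ltrBrDl.
case: E3 => [->|E3]; [by left|right].
by rewrite wsum_cons -addrA -lerBlDl.
Qed.

End Weights.


Section Key.
Variables (R : realType) (S : Type) (mul : S -> S -> S) (e : S).
Hypothesis massoc : forall x y z, mul x (mul y z) = mul (mul x y) z.
Hypothesis runit : forall x, mul x e = x.
Variable U : nat -> set S.
Hypothesis Ue : forall n, U n e.
Hypothesis Ucube : forall n a b c, U n.+1 a -> U n.+1 b -> U n.+1 c -> U n (mul a (mul b c)).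

Lemma U_decr n u : U n.+1 u -> U n u.
Proof. by move=> h; have := Ucube h (Ue _) (Ue _); rewrite !runit. Qed.

Lemma U_le m n u : (m <= n)%N -> U n u -> U m u.
Proof.
move=> /subnK <-; elim: (n - m)%N => [|k IH] //= h.
by apply: IH; apply: U_decr; rewrite -addSn.
Qed.

Lemma key k : forall ns x y m, (size ns <= k)%N -> reach mul U x ns y ->
  wsum R ns < w R m -> exists2 u, U m u & y = mul x u.
Proof.
elim: k => [|k IH] [|n0 ns0] x y m //=; try by move=> _ ->; exists e; rewrite ?runit.
move=> sz0 r0 hs.
have sz : (size (n0 :: ns0) <= k.+1)%N := sz0.
have r : reach mul U x (n0 :: ns0) y := r0.
have [pre [n [suf [E1 E2 E3]]]] := wsplit (ns := n0 :: ns0) isT (w_gt0 R m.+1).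
rewrite E1 in r hs sz.
have [x1 r1 /= [u Uu r2]] := reach_cat_inv r.
rewrite wsum_cat wsum_cons in hs.
have hpre : (size pre <= k)%N.
  by move: sz; rewrite size_cat /= addnS ltnS; apply: leq_trans; apply: leq_addr.
have hsuf : (size suf <= k)%N.
  by move: sz; rewrite size_cat /= addnS ltnS; apply: leq_trans; apply: leq_addl.
have [a Ua Ex1] := IH _ _ _ _ hpre r1 E2; subst x1.
have hsw : wsum R suf < w R m.+1.
  case: E3 => [->|E3]; first by rewrite wsum_nil w_gt0.
  have : w R m = w R m.+1 + w R m.+1 by rewrite wS -splitr.
  move=> hm; rewrite hm in hs.
  move: hs; rewrite addrA => hs.
  by rewrite -(ltrD2l (wsum R pre + w R n)); apply: lt_le_trans hs _; rewrite lerD2r.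
have [c Uc Ey] := IH _ _ _ _ hsuf r2 hsw; subst y.
have hn : w R n < w R m.
  apply: le_lt_trans hs; rewrite addrCA lerDl.
  by apply: addr_ge0; apply: wsum_ge0.
have Un : U m.+1 u by apply: (U_le (w_lt hn)).
by exists (mul a (mul u c)); [apply: Ucube|rewrite !massoc].
Qed.

End Key.


Section DQ.
Variables (R : realType) (S : Type) (mul : S -> S -> S) (e : S).
Hypothesis massoc : forall x y z, mul x (mul y z) = mul (mul x y) z.
Hypothesis runit : forall x, mul x e = x.
Variable U : nat -> set S.
Hypothesis Ue : forall n, U n e.
Hypothesis Ucube : forall n a b c, U n.+1 a -> U n.+1 b -> U n.+1 c -> U n (mul a (mul b c)).

Definition dE x y : set R :=
  [set r | r = 1 \/ exists2 ns, reach mul U x ns y & wsum R ns = r].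
Definition dq x y : R := inf (dE x y).

Lemma dE_ne x y : dE x y !=set0.
Proof. by exists 1; left. Qed.

Lemma dE_lb x y : lbound (dE x y) 0.
Proof. by move=> r [->|[ns _ <-]]; [apply: ler01|apply: wsum_ge0]. Qed.

Lemma dq_le x y r : dE x y r -> dq x y <= r.
Proof. by move=> h; apply: ge_inf => //; exists 0; apply: dE_lb. Qed.

Lemma dq_ge0 x y : 0 <= dq x y.
Proof. by apply: lb_le_inf; [apply: dE_ne|apply: dE_lb]. Qed.

Lemma dq_le1 x y : dq x y <= 1.
Proof. by apply: dq_le; left. Qed.

Lemma dq_refl x : dq x x = 0.
Proof.
apply/eqP; rewrite eq_le dq_ge0 andbT.
by apply: dq_le; right; exists [::]; rewrite ?wsum_nil.
Qed.

Lemma dq_lt x y c : dq x y < c -> exists2 r, dE x y r & r < c.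
Proof. exact/inf_lt/dE_ne. Qed.

Lemma dq_triangle x y z : dq x z <= dq x y + dq y z.
Proof.
have H : forall r1 r2, dE x y r1 -> dE y z r2 -> dq x z <= r1 + r2.
  move=> r1 r2 [->|[ns1 h1 <-]].
    move=> h2; apply: le_trans (dq_le1 _ _) _.
    by rewrite lerDl; apply: dE_lb h2.
  move=> [->|[ns2 h2 <-]].
    by apply: le_trans (dq_le1 _ _) _; rewrite lerDr wsum_ge0.
  by apply: dq_le; right; exists (ns1 ++ ns2); [apply: reach_cat h1 h2|rewrite wsum_cat].
rewrite -lerBlDr; apply: lb_le_inf; first exact: dE_ne.
move=> r2 h2; rewrite lerBlDr addrC -lerBlDr.
apply: lb_le_inf; first exact: dE_ne.
by move=> r1 h1; rewrite lerBlDr addrC; apply: H.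
Qed.

Lemma dq_leftsub x y z : dq (mul z x) (mul z y) <= dq x y.
Proof.
apply: lb_le_inf; first exact: dE_ne.
move=> r [->|[ns h <-]]; apply: dq_le; first by left.
by right; exists ns => //; apply: reach_left.
Qed.

Lemma dq_step m y u : U m u -> dq y (mul y u) <= w R m.
Proof.
move=> h; apply: dq_le; right; exists [:: m]; last by rewrite wsum_cons wsum_nil addr0.
by exists u.
Qed.

Lemma dq_ball m x y : dq x y < w R m -> exists2 u, U m u & y = mul x u.
Proof.
move=> /dq_lt [r [->|[ns h <-]] hr].
  by exfalso; move: hr; rewrite ltNge (le_trans (w_le R (leq0n m))) // w0.
exact: (key massoc runit Ue Ucube (leqnn _) h hr).
Qed.

Lemma dq_transl y z s : dq y z < s -> s <= 1 ->
  exists g, z = mul y g /\ forall y', dq y' (mul y' g) < s.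
Proof.
move=> /dq_lt [r [->|[ns h <-]] hr] s1.
  by exfalso; move: hr; rewrite ltNge s1.
have [g [-> Hg]] := reach_trans massoc runit h.
exists g; split => // y'; apply: le_lt_trans hr; apply: dq_le; right.
by exists ns.
Qed.

End DQ.


Section Topo.
Variables (R : realType) (S : topologicalType) (mul : S -> S -> S) (e : S).
Hypothesis massoc : forall x y z, mul x (mul y z) = mul (mul x y) z.
Hypothesis mcont : continuous (fun p : S * S => mul p.1 p.2).
Hypothesis runit : forall x, mul x e = x.
Hypothesis oru : forall (V : set S) (x : S), nbhs e V -> nbhs x (mul x @` V).

Lemma mul_contl u : continuous (fun z => mul z u).
Proof.
move=> x.
apply: (@continuous_comp _ _ _ (fun z => (z, u)) (fun p : S * S => mul p.1 p.2) x).
  by apply: cvg_pair; [exact: cvg_id|exact: cvg_cst].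
exact: mcont.
Qed.

Lemma mul_contr z : continuous (mul z).
Proof.
move=> x.
apply: (@continuous_comp _ _ _ (fun y => (z, y)) (fun p : S * S => mul p.1 p.2) x).
  by apply: cvg_pair; [exact: cvg_cst|exact: cvg_id].
exact: mcont.
Qed.

Lemma nbhs_mulx x W : nbhs x W -> nbhs e (mul x @^-1` W).
Proof. move=> h; have H := @mul_contr x e; rewrite /continuous_at runit in H; exact: H _ h. Qed.

Lemma sq_nbhs W : nbhs e W ->
  exists W1, nbhs e W1 /\ forall a b, W1 a -> W1 b -> W (mul a b).
Proof.
move=> hW.
have : nbhs (mul (e, e).1 (e, e).2) W by rewrite /= runit.
move=> /(@mcont (e, e)) [[A B] /= [nA nB] sub].
exists (A `&` B); split; first exact: filterI.
by move=> a b [Aa _] [_ Bb]; apply: (sub (a, b)).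
Qed.

Lemma cube_nbhs W : nbhs e W ->
  exists W', nbhs e W' /\ forall a b c, W' a -> W' b -> W' c -> W (mul a (mul b c)).
Proof.
move=> /sq_nbhs [W1 [n1 h1]]; have [W2 [n2 h2]] := sq_nbhs n1.
exists (W1 `&` W2); split; first exact: filterI.
by move=> a b c [a1 _] [_ b2] [_ c2]; apply: h1 => //; apply: h2.
Qed.

Lemma cl_dist_cont (d : S -> S -> R) : quasi_pseudometric d ->
  left_subinvariant mul d ->
  (forall eps, 0 < eps -> nbhs e (qball d e eps)) -> cl_dist_continuous d.
Proof.
move=> [d0 [dxx dtri]] dsub dnb A [a Aa] x.
set E := fun y => [set eps : R | 0 < eps /\ closure (qball_set d A eps) y].
have E_ne y : E y !=set0.
  exists (d a y + 1); split; first by rewrite ltr_pwDr.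
  by apply: subset_closure; exists a => //; rewrite ltrDl.
have E_lb y : lbound (E y) 0 by move=> r [/ltW].
have f_le y r : E y r -> cl_dist d A y <= r.
  move=> h; rewrite /cl_dist; apply: (ge_inf _ h); exists 0; exact: E_lb.
have f_ge0 y : 0 <= cl_dist d A y by exact: (lb_le_inf (E_ne y) (E_lb y)).
have mono r1 r2 : r1 <= r2 -> qball_set d A r1 `<=` qball_set d A r2.
  by move=> h t [b Ab hb]; exists b => //; apply: lt_le_trans h.
apply/cvgrPdist_lt => eps eps0.
have H1 : nbhs x [set t | cl_dist d A t < cl_dist d A x + eps].
  have e2 : 0 < eps / 2 by rewrite divr_gt0.
  have hlt : cl_dist d A x < cl_dist d A x + eps / 2 by rewrite ltrDl.
  have [r [r0 clr] hr] := inf_lt (E_ne x) hlt.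
  apply: filterS (oru x (dnb _ e2)) => _ [u hu <-].
  have : cl_dist d A (mul x u) <= r + eps / 2.
    apply: f_le; split; first by rewrite addr_gt0.
    move=> B nB.
    have := @mul_contl u x B nB => /clr [m [[b Ab hb] Bm]].
    exists (mul m u); split => //; exists b => //.
    apply: le_lt_trans (dtri _ m _) _.
    apply: ltrD => //; have := dsub e u m; rewrite runit => h0; exact: le_lt_trans h0 hu.
  move=> h; apply: le_lt_trans h _.
  by rewrite {2}(splitr eps) addrA ltrD2r.
have H2 : nbhs x [set t | cl_dist d A x - eps < cl_dist d A t].
  set c := cl_dist d A x - eps / 2.
  have hc : cl_dist d A x - eps < c.
    by rewrite /c ltrD2l ltrN2 ltr_pdivrMr // ltr_pMr // ltr1n.
  have [c0|c0] := leP c 0.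
    apply: filterS filterT => t _; apply: lt_le_trans hc _.
    exact: le_trans c0 (f_ge0 t).
  have ncl : ~ closure (qball_set d A c) x.
    move=> h; have := f_le x c (conj c0 h).
    rewrite /c => h1; have e2 : 0 < eps / 2 by rewrite divr_gt0.
    move: h1 e2; set u := cl_dist d A x; set v := eps / 2; lra.
  have : nbhs x (~` closure (qball_set d A c)).
    by apply: open_nbhs_nbhs; split => //; apply: closed_openC; apply: closed_closure.
  apply: filterS => t nt; apply: lt_le_trans hc _.
  apply: lb_le_inf; first exact: E_ne t.
  move=> r [r0 hr].
  rewrite leNgt; apply/negP => rc; apply: nt.
  by apply: closure_subset hr; apply: mono; apply: ltW.
apply: filterS (filterI H1 H2) => t [h1 h2] /=.
by rewrite ltr_distlC h2.
Qed.

End Topo.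


Section Metr.
Variables (R : realType) (S : topologicalType) (mul : S -> S -> S) (e : S).
Hypothesis massoc : forall x y z, mul x (mul y z) = mul (mul x y) z.
Hypothesis mcont : continuous (fun p : S * S => mul p.1 p.2).
Hypothesis runit : forall x, mul x e = x.
Hypothesis oru : forall (V : set S) (x : S), nbhs e V -> nbhs x (mul x @` V).
Variable U : nat -> set S.
Hypothesis HU : forall n, nbhs e (U n).
Hypothesis Ucube : forall n a b c, U n.+1 a -> U n.+1 b -> U n.+1 c -> U n (mul a (mul b c)).

Let Ue n : U n e := nbhs_singleton (HU n).
Local Notation d := (dq R mul U).

Lemma d_qpm : quasi_pseudometric d.
Proof.
split; first by move=> x y; apply: dq_ge0.
split; first by move=> x; apply: dq_refl.
by move=> x y z; apply: dq_triangle.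
Qed.

Lemma d_sub : left_subinvariant mul d.
Proof. by move=> x y z; apply: dq_leftsub. Qed.

Lemma d_open x eps : open (qball d x eps).
Proof.
rewrite openE => y hy; rewrite /interior.
have hpos : 0 < eps - d x y by rewrite subr_gt0.
have [m hm] := w_small hpos.
apply: filterS (oru y (HU m)) => _ [u Uu <-].
rewrite /qball /=; apply: le_lt_trans (dq_triangle _ _ _ x y _) _.
have := dq_step R mul y Uu; move: hm hy; rewrite /qball /=.
set a := d x y; set b := d y (mul y u); set c := w R m; lra.
Qed.

Lemma d_nbhs x eps : 0 < eps -> nbhs x (qball d x eps).
Proof.
move=> e0; apply: open_nbhs_nbhs; split; first exact: d_open.
by rewrite /qball /= dq_refl.
Qed.

Lemma d_dist : cl_dist_continuous d.
Proof.
apply: (cl_dist_cont mcont runit oru d_qpm d_sub) => eps e0.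
exact: d_nbhs.
Qed.

Lemma d_sub1 x : qball d x 1 `<=` mul x @` U 0.
Proof.
move=> y; rewrite /qball /= -(w0 R) => /(dq_ball massoc runit Ue Ucube) [u Uu ->].
by exists u.
Qed.

Definition dp x y := cl_dist d [set x] y.

Lemma qs1 x eps : qball_set d [set x] eps = qball d x eps.
Proof.
rewrite /qball_set /qball; apply/seteqP; split => t /=; first by case=> a ->.
by move=> h; exists x.
Qed.

Lemma dp_le x y r : 0 < r -> closure (qball d x r) y -> dp x y <= r.
Proof.
move=> r0 h; rewrite /dp /cl_dist; apply: ge_inf.
  by exists 0 => s [/ltW].
by split => //; rewrite qs1.
Qed.

Lemma Ep_ne x y : [set eps | 0 < eps /\ closure (qball_set d [set x] eps) y] !=set0.
Proof.
exists (d x y + 1); split; first by rewrite ltr_pwDr // dq_ge0.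
by rewrite qs1; apply: subset_closure; rewrite /qball /= ltrDl.
Qed.

Lemma dp_ge0 x y : 0 <= dp x y.
Proof. by apply: lb_le_inf; [exact: Ep_ne|move=> s [/ltW]]. Qed.

Lemma dp_lt x y c : dp x y < c -> exists2 r, 0 < r /\ closure (qball d x r) y & r < c.
Proof.
move=> /(inf_lt (Ep_ne x y)) [r [r0 h] hr]; exists r => //.
by split => //; rewrite -qs1.
Qed.

Lemma dp_le1 x y : dp x y <= 1.
Proof.
apply/ler_addgt0Pr => eps e0; apply: dp_le; first by rewrite ltr_pwDr.
apply: subset_closure; rewrite /qball /=.
by apply: le_lt_trans (dq_le1 _ _ _ _ _) _; rewrite ltrDl.
Qed.

Lemma dp_refl x : dp x x = 0.
Proof.
apply/eqP; rewrite eq_le dp_ge0 andbT.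
apply/ler_addgt0Pr => eps e0; rewrite add0r; apply: dp_le => //.
by apply: subset_closure; rewrite /qball /= dq_refl.
Qed.

Lemma cl_closed (A : set S) x : closure (closure A) x -> closure A x.
Proof. by rewrite -(proj1 (closure_id _) (@closed_closure _ A)). Qed.

Lemma dp_tri_aux x y z r s : 0 < r -> 0 < s -> s <= 1 ->
  closure (qball d x r) y -> closure (qball d y s) z -> closure (qball d x (r + s)) z.
Proof.
move=> r0 s0 s1 hy hz.
have sub : qball d y s `<=` closure (qball d x (r + s)).
  move=> t ht; have [g [-> Hg]] := dq_transl massoc runit ht s1.
  move=> B nB; have := mul_contl mcont (u:=g) (x:=y) nB => /hy [y' [hy' By']].
  exists (mul y' g); split => //; rewrite /qball /=.
  apply: le_lt_trans (dq_triangle _ _ _ x y' _) _.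
  by apply: ltrD => //; apply: Hg.
by apply: cl_closed; apply: closure_subset hz.
Qed.

Lemma dp_tri x y z : dp x z <= dp x y + dp y z.
Proof.
have [h1|h1] := leP 1 (dp y z).
  apply: le_trans (dp_le1 _ _) _; apply: le_trans h1 _.
  by rewrite lerDr dp_ge0.
apply/ler_addgt0Pr => eps e0.
have e2 : 0 < eps / 2 by rewrite divr_gt0.
have hc1 : dp x y < dp x y + eps / 2 by rewrite ltrDl.
have [r [r0 hr] hrc] := dp_lt hc1.
have hc2 : dp y z < Order.min (dp y z + eps / 2) 1 by rewrite lt_min ltrDl e2 h1.
have [s [s0 hs] hsc] := dp_lt hc2.
move: hsc; rewrite lt_min => /andP [hs1 hs2].
apply: le_trans (dp_le (addr_gt0 r0 s0) (dp_tri_aux r0 s0 (ltW hs2) hr hs)) _.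
move: hrc hs1; set a := dp x y; set b := dp y z; lra.
Qed.

Lemma dp_sub : left_subinvariant mul dp.
Proof.
move=> x y z; apply: lb_le_inf; first exact: Ep_ne.
move=> r [r0 hr]; rewrite qs1 in hr; apply: dp_le => //.
move=> B nB; have := mul_contr mcont (z:=z) (x:=y) nB => /hr [y' [hy' By']].
exists (mul z y'); split => //; rewrite /qball /=.
apply: le_lt_trans _ hy'; exact: dq_leftsub.
Qed.

Lemma dp_cont x : continuous (dp x).
Proof. by apply: d_dist; exists x. Qed.

Lemma dp_open x eps : open (qball dp x eps).
Proof.
rewrite openE => y hy; rewrite /interior.
have hpos : 0 < eps - dp x y by rewrite subr_gt0.
have := @dp_cont x y => /cvgrPdist_lt /(_ _ hpos).
apply: filterS => t; rewrite ltr_distlC => /andP [_ h].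
move: h hy; rewrite /qball /=; set a := dp x y; set b := dp x t; lra.
Qed.

Lemma dp_nbhs x eps : 0 < eps -> nbhs x (qball dp x eps).
Proof.
move=> e0; apply: open_nbhs_nbhs; split; first exact: dp_open.
by rewrite /qball /= dp_refl.
Qed.

Lemma dp_qpm : quasi_pseudometric dp.
Proof.
split; first by move=> x y; apply: dp_ge0.
split; first by move=> x; apply: dp_refl.
by move=> x y z; apply: dp_tri.
Qed.

Lemma dp_dist : cl_dist_continuous dp.
Proof.
apply: (cl_dist_cont mcont runit oru dp_qpm dp_sub) => eps e0.
exact: dp_nbhs.
Qed.

Lemma dp_rc : right_continuous_qpm dp.
Proof. by move=> x; apply: dp_cont. Qed.

Lemma dp_ball1 x : qball dp x 1 `<=` closure (qball d x 1).
Proof.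
move=> y /dp_lt [r [r0 hr] r1]; apply: closure_subset hr.
by move=> t; rewrite /qball /= => h; apply: lt_trans h r1.
Qed.

End Metr.

Unset Implicit Arguments. Set Strict Implicit.

Theorem corollary6p2 (R : realType) (S : topologicalType) (mul : S -> S -> S)
  (e : S) (K : Type) :
  topological_semigroup mul -> open_right_unit mul e ->
  (* K is a set of cardinality chi(S) (any |K| >= chi(S) works too) *)
  @character_le S K ->
  (exists D : set (S -> S -> R),
     (D #<= [set: K])%card /\ generates_topology D /\
     (forall d, D d -> [/\ quasi_pseudometric d, left_subinvariant mul d
                         & cl_dist_continuous d])) /\
  (@semiregular S ->
   exists D : set (S -> S -> R),
     (D #<= [set: K])%card /\ generates_topology D /\
     (forall d, D d -> [/\ quasi_pseudometric d, left_subinvariant mul d,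
                         cl_dist_continuous d & right_continuous_qpm d])).
Proof.
move=> [massoc mcont] [runit oru] hchar.
have [B [[Bn Bb] Bcard]] := hchar e.
have hsh : forall W : set S, exists W' : set S, nbhs e W ->
    nbhs e W' /\ (forall a b c, W' a -> W' b -> W' c -> W (mul a (mul b c))).
  move=> W; have [hW|hW] := pselect (nbhs e W); last by exists W.
  have [W' h] := cube_nbhs mcont runit hW; by exists W'.
have [f hf] := choice hsh.
pose Useq (V : set S) n := iter n f V.
have HUseq : forall V, nbhs e V -> forall n, nbhs e (Useq V n).
  move=> V hV; elim => [|n IH] //=; exact: (hf _ IH).1.
have Hcube : forall V, nbhs e V -> forall n a b c, Useq V n.+1 a -> Useq V n.+1 b ->
    Useq V n.+1 c -> Useq V n (mul a (mul b c)).
  by move=> V hV n; exact: (hf _ (HUseq V hV n)).2.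
have getV : forall (W : set S) x, nbhs x W -> exists2 V0, B V0 & mul x @` V0 `<=` W.
  move=> W x hW; have [V0 BV0 sub] := Bb _ (nbhs_mulx mcont runit hW).
  by exists V0 => // _ [u /sub hu <-].
split.
  exists [set dq R mul (Useq V) | V in B]; split.
    exact: card_le_trans (card_image_le _ _) Bcard.
  split; last first.
    move=> _ [V BV <-]; have hV := Bn _ BV; split.
    - exact: d_qpm.
    - exact: (d_sub R massoc).
    - eapply d_dist; eauto.
  split.
    move=> _ x eps [V BV <-] _; have hV := Bn _ BV.
    exact: (d_open oru (HUseq V hV)).
  move=> W x oW Wx.
  have [V0 BV0 sub] := getV W x (open_nbhs_nbhs (conj oW Wx)).
  have hV := Bn _ BV0.
  exists [:: (dq R mul (Useq V0), x, 1)]; split.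
    move=> t; rewrite mem_seq1 => /eqP -> /=; split => //; first by exists V0.
    have h0 := dq_refl R mul (Useq V0) x; apply: (@le_lt_trans _ _ 0); [by rewrite h0 | exact: ltr01].
  move=> y /(_ (dq R mul (Useq V0), x, 1)); rewrite mem_seq1 eqxx => /(_ isT) /= hy.
  apply: sub; exact: (d_sub1 massoc runit (HUseq V0 hV) (Hcube V0 hV) hy).
move=> hsr.
exists [set dp R mul (Useq V) | V in B]; split.
  exact: card_le_trans (card_image_le _ _) Bcard.
split; last first.
  move=> _ [V BV <-]; have hV := Bn _ BV; split.
  - eapply dp_qpm; eauto.
  - eapply dp_sub; eauto.
  - eapply dp_dist; eauto.
  - eapply dp_rc; eauto.
split.
  move=> _ x eps [V BV <-] _; have hV := Bn _ BV.
  eapply dp_open; eauto.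
move=> W x oW Wx.
have [W1 [nW1 sW1]] := hsr x W (open_nbhs_nbhs (conj oW Wx)).
have [V0 BV0 sub] := getV W1 x nW1.
have hV := Bn _ BV0.
exists [:: (dp R mul (Useq V0), x, 1)]; split.
  move=> t; rewrite mem_seq1 => /eqP -> /=; split => //; first by exists V0.
  have h0 : dp R mul (Useq V0) x x = 0 by eapply dp_refl; eauto.
  rewrite /qball /=; apply: (@le_lt_trans _ _ 0); [by rewrite h0 | exact: ltr01].
move=> y /(_ (dp R mul (Useq V0), x, 1)); rewrite mem_seq1 eqxx => /(_ isT) /= hy.
apply: sW1.
have ny : nbhs y (qball (dp R mul (Useq V0)) x 1).
  apply: open_nbhs_nbhs; split => //.
  eapply dp_open; eauto.
apply: (interiorS _ ny) => t ht.
have : closure (qball (dq R mul (Useq V0)) x 1) t by eapply dp_ball1; eauto.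
apply: closure_subset => z hz; apply: sub.
exact: (d_sub1 massoc runit (HUseq V0 hV) (Hcube V0 hV) hz).
Qed.
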